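(* Let $X=\mathbb{R}/\mathbb{Z}$ be the circle with its standard metric, and let $\mu_1=\mu_2$ be Lebesgue measure. Let $(X,T_1,\mu_1)$ be exponentially mixing for $BV$ against $L^\infty$ and let $T_2(x)=x+\alpha \bmod 1$ be the rotation by an angle $\alpha$. Let $(r_n)_n$ be a sequence of positive numbers. (1) If $n^2r_n\to0$, then $(\mu_1\times\mu_2)(\liminf_n E_{n,r_n}^{T_1,T_2})=0$. (2) If $(r_n)_n$ and $(nr_n)_n$ are decreasing and $\sum_{n=1}^\infty nr_n<\infty$, then $(\mu_1\times\mu_2)(\limsup_n E_{n,r_n}^{T_1,T_2})=0$.
   Context: $(X,T,\mu)$ is exponentially mixing for $BV$ against $L^\infty$ if there are $C,\theta>0$ such that for all $\psi$ of bounded variation, all $\varphi\in L^\infty(\mu)$ and all $n\ge0$, $\bigl|\int\psi\cdot\varphi\circ T^n\,d\mu-\int\psi\,d\mu\int\varphi\,d\mu\bigr|\le C\|\psi\|_{BV}\|\varphi\|_{L^\infty}e^{-\theta n}$. For $n\in\mathbb{N}$ and $r>0$, $E_{n,r}^{T_1,T_2}:=\{(x,y)\in X\times X : d(T_1^i x, T_2^j y)<r \text{ for some } 0\le i,j<n\}$; $E_{n,r_n}^{T_1,T_2}$ denotes this set with $r=r_n$. *)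

(* Defs.v *)
From HB Require Import structures.
From mathcomp Require Import all_boot all_order all_algebra.
From mathcomp Require Import all_classical all_reals all_analysis.
Set Implicit Arguments. Unset Strict Implicit. Unset Printing Implicit Defensive.
Import Order.TTheory GRing.Theory Num.Theory.
Import numFieldNormedType.Exports.
Local Open Scope classical_set_scope.
Local Open Scope ring_scope.

Section Defs.
Context {R : realType}.

(* The circle R/Z is modelled by the fundamental domain [0,1) *)
Definition circle : set R := `[0, 1[%classic.

Definition frac (t : R) : R := t - (Num.floor t)%:~R.

Definition circ_dist (x y : R) : R := Num.min (frac (x - y)) (1 - frac (x - y)).

Definition rotation (alpha : R) (x : R) : R := frac (x + alpha).

Definition leb := (@lebesgue_measure R).

Definition lebesgue_mp (T : R -> R) : Prop :=
  (forall x, circle x -> circle (T x)) /\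
  measurable_fun circle T /\
  (forall A : set R, measurable A -> A `<=` circle ->
     leb (circle `&` T @^-1` A) = leb A).

(* exponential mixing for BV against L^infty on (X, T, Lebesgue).
   ||psi||_BV = sup_X |psi| + Var(psi), ||phi||_{L^infty} = ess sup |phi|;
   quantifying over all upper bounds S, V, M of these quantities is the
   same as using the norms themselves. *)
Definition exp_mixing_BV_Linf (T : R -> R) : Prop :=
  exists C theta : R, 0 < C /\ 0 < theta /\
  forall (psi phi : R -> R) (S V M : R) (n : nat),
    (forall x, x \in `[0, 1]%R -> `|psi x| <= S) ->
    (total_variation 0 1 psi <= V%:E)%E ->
    measurable_fun circle phi ->
    {ae leb, forall x, circle x -> `|phi x| <= M} ->
    `| (\int[leb]_(x in circle) (psi x * phi (iter n T x)))
       - (\int[leb]_(x in circle) psi x) * (\int[leb]_(x in circle) phi x) |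
      <= C * (S + V) * M * expR (- theta * n%:R).

Definition Ehit (T1 T2 : R -> R) (n : nat) (r : R) : set (R * R) :=
  [set xy | circle xy.1 /\ circle xy.2 /\
     exists i j : nat, (i < n)%N /\ (j < n)%N /\
       circ_dist (iter i T1 xy.1) (iter j T2 xy.2) < r].

Definition liminf_set {T : Type} (F : (set T)^nat) : set T :=
  \bigcup_N \bigcap_(n in [set n | (N <= n)%N]) F n.
Definition limsup_set {T : Type} (F : (set T)^nat) : set T :=
  \bigcap_N \bigcup_(n in [set n | (N <= n)%N]) F n.

End Defs.

(* Main.v *)
Require Import Defs.
From HB Require Import structures.
From mathcomp Require Import all_boot all_order all_algebra.
From mathcomp Require Import all_classical all_reals all_analysis.
From mathcomp Require Import ring lra zify.
Import Order.TTheory GRing.Theory Num.Theory.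
Import numFieldNormedType.Exports.
Local Open Scope classical_set_scope.
Local Open Scope ring_scope.

Section Aux.
Variable R : realType.

Lemma lebS {A B : set R} : A `<=` B -> (leb A <= leb B)%E.
Proof. move=> AB. rewrite /leb /lebesgue_measure /lebesgue_stieltjes_measure /measure_extension.
apply: le_outer_measure. exact AB. Qed.

Lemma lebU2 (A B : set R) : (leb (A `|` B) <= leb A + leb B)%E.
Proof. rewrite /leb /lebesgue_measure /lebesgue_stieltjes_measure /measure_extension.
exact: outer_measureU2. Qed.

Lemma leb_sub (F : (set R)^nat) : (leb (\bigcup_n F n) <= \sum_(i <oo) leb (F i))%E.
Proof. rewrite /leb /lebesgue_measure /lebesgue_stieltjes_measure /measure_extension.
exact: outer_measure_sigma_subadditive. Qed.

Lemma leb_tail N (F : (set R)^nat) :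
  (leb (\bigcup_(n in ~` `I_N) F n) <= \sum_(N <= i <oo) leb (F i))%E.
Proof. rewrite /leb /lebesgue_measure /lebesgue_stieltjes_measure /measure_extension.
exact: outer_measure_sigma_subadditive_tail. Qed.

Lemma leb_ge0 (A : set R) : (0 <= leb A)%E.
Proof. exact: measure_ge0. Qed.

Lemma leb_circle : leb (circle : set R) = 1%E.
Proof. rewrite /leb /circle lebesgue_measure_itv /= ifT ?lte_fin ?ltr01 //.
by rewrite oppr0 adde0. Qed.

Lemma leb_ball (c r : R) : 0 <= r -> leb (ball c r) = (r *+ 2)%:E.
Proof. move=> r0; exact: lebesgue_measure_ball. Qed.

Lemma frac_ge0 (t : R) : 0 <= Defs.frac t.
Proof. rewrite /Defs.frac subr_ge0; exact: floor_le. Qed.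

Lemma frac_lt1 (t : R) : Defs.frac t < 1.
Proof. rewrite /Defs.frac ltrBlDl. have := Num.Theory.floorD1_gt t. by rewrite intrD. Qed.


Lemma iter_rot (alpha y : R) (j : nat) :
  exists z : int, iter j (rotation alpha) y = y + j%:R * alpha + z%:~R.
Proof.
elim: j => [|j [z IH]] /=; first by exists 0; rewrite mul0r !addr0.
exists (z - Num.floor (iter j (rotation alpha) y + alpha)).
rewrite /rotation /Defs.frac IH intrB mulrSr. ring.
Qed.

Lemma dist_int (u v r : R) : circ_dist u v < r ->
  exists m : int, `|u - v - m%:~R| < r.
Proof.
rewrite /circ_dist gt_min => /orP[h|h].
  exists (Num.floor (u - v)).
  by rewrite ger0_norm ?frac_ge0.
exists (Num.floor (u - v) + 1).
have h0 := frac_lt1 (u - v).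
rewrite ler0_norm; last by move: h0; rewrite /Defs.frac intrD; lra.
move: h; rewrite /Defs.frac intrD; lra.
Qed.

Definition Cset (alpha a : R) (j : nat) (r : R) : set R :=
  [set y | circle y /\ circ_dist a (iter j (rotation alpha) y) < r].

Lemma Cset_cover alpha a j r : r <= 1 ->
  Cset alpha a j r `<=`
  ball (Defs.frac (a - j%:R * alpha) - 1) r `|` ball (Defs.frac (a - j%:R * alpha)) r
  `|` ball (Defs.frac (a - j%:R * alpha) + 1) r.
Proof.
move=> r1 y [cy /dist_int [m hm]].
have [z hz] := iter_rot alpha y j.
rewrite hz in hm.
set e := Defs.frac (a - j%:R * alpha).
have e0 := frac_ge0 (a - j%:R * alpha).
have e1 := frac_lt1 (a - j%:R * alpha).
set k := Num.floor (a - j%:R * alpha) - z - m.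
have hk : `|e + k%:~R - y| < r.
  suff -> : e + k%:~R - y = a - (y + j%:R * alpha + z%:~R) - m%:~R by [].
  rewrite /k /e /Defs.frac !intrB. ring.
move: cy; rewrite /circle /= in_itv /= => /andP[y0 y1].
have /ltr_normlP [hk1 hk2] := hk. rewrite -/e in e0 e1.
have km : (-2)%:~R < k%:~R :> R by rewrite -[(-2)%:~R]/(-2 : R); lra.
have kp : k%:~R < 2%:~R :> R by rewrite -[(2)%:~R]/(2 : R); lra.
rewrite ltr_int in km; rewrite ltr_int in kp.
have : k = -1 \/ k = 0 \/ k = 1 by lia.
move=> [hk'|[hk'|hk']]; rewrite hk' in hk.
- by left; left; rewrite /ball /=; move: hk; rewrite -[(-1)%:~R]/(-1 : R).
- by left; right; rewrite /ball /=; move: hk; rewrite -[(0)%:~R]/(0 : R) addr0.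
- by right; rewrite /ball /=.
Qed.


Lemma Cset_bound alpha a j r : 0 < r -> (leb (Cset alpha a j r) <= (r * 6)%:E)%E.
Proof.
move=> r0.
have [h|h] := lerP 1 (r * 6).
  apply: (@le_trans _ _ (leb (circle : set R))).
    by apply: lebS => y [].
  by rewrite leb_circle lee_fin.
have r1 : r <= 1 by lra.
apply: le_trans; first exact: (lebS (Cset_cover alpha a j r r1)).
apply: le_trans; first exact: lebU2.
have -> : r * 6 = r *+ 2 + r *+ 2 + r *+ 2.
  by rewrite -!mulrnDr mulr_natr.
rewrite !EFinD.
apply: leeD; last by rewrite leb_ball // ltW.
apply: le_trans; first exact: lebU2.
by apply: leeD; rewrite leb_ball // ltW.
Qed.

Lemma leb_fin (G : nat -> set R) (c : R) (n : nat) : 0 <= c ->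
  (forall i, (i < n)%N -> (leb (G i) <= c%:E)%E) ->
  (leb [set y | exists i, (i < n)%N /\ G i y] <= (n%:R * c)%:E)%E.
Proof.
move=> c0; elim: n => [|n IH] H.
  rewrite mul0r; apply: le_trans; first apply: (@lebS _ set0).
    by move=> y [i []].
  by rewrite /leb measure0.
apply: le_trans; first apply: (@lebS _ ([set y | exists i, (i < n)%N /\ G i y] `|` G n)).
  move=> y [i [hi Gy]]; rewrite ltnS leq_eqVlt in hi.
  case/orP: hi => [/eqP <-|hi]; [by right|by left; exists i].
apply: le_trans; first exact: lebU2.
rewrite mulrSr mulrDl mul1r EFinD; apply: leeD.
  by apply: IH => i hi; apply: H; exact: ltnW.
exact: H.
Qed.


Definition Sx (T1 : R -> R) alpha x n r : set R :=
  [set y | circle x /\ circle y /\ exists i j : nat, (i < n)%N /\ (j < n)%N /\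
     circ_dist (iter i T1 x) (iter j (rotation alpha) y) < r].

Lemma Sx_bound T1 alpha x n r : 0 < r ->
  (leb (Sx T1 alpha x n r) <= (n%:R ^+ 2 * r * 6)%:E)%E.
Proof.
move=> r0.
have -> : n%:R ^+ 2 * r * 6 = n%:R * (n%:R * (r * 6)) by ring.
apply: le_trans; first apply: (@lebS _
  [set y | exists i, (i < n)%N /\
     [set y | exists j, (j < n)%N /\ Cset alpha (iter i T1 x) j r y] y]).
  by move=> y [cx [cy [i [j [hi [hj hd]]]]]]; exists i; split => //; exists j.
apply: leb_fin; first by apply: mulr_ge0 => //; lra.
move=> i hi; apply: leb_fin; first lra.
move=> j hj; exact: Cset_bound.
Qed.

Definition Dx (T1 : R -> R) alpha x m r : set R :=
  [set y | exists j, (j < m)%N /\ Cset alpha (iter m.-1 T1 x) j r y] `|`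
  [set y | exists i, (i < m)%N /\ Cset alpha (iter i T1 x) m.-1 r y].

Lemma Dx_bound T1 alpha x m r : 0 < r ->
  (leb (Dx T1 alpha x m r) <= (m%:R * r * 12)%:E)%E.
Proof.
move=> r0.
have -> : m%:R * r * 12 = m%:R * (r * 6) + m%:R * (r * 6) by ring.
apply: le_trans; first exact: lebU2.
rewrite EFinD; apply: leeD; apply: leb_fin; try lra;
  move=> i hi; exact: Cset_bound.
Qed.

Lemma nsn_to0 (r : R^nat) : (forall n, (1 <= n)%N -> 0 < r n) ->
  (forall n, (1 <= n)%N -> n.+1%:R * r n.+1 <= n%:R * r n) ->
  cvgn (series (fun n => n%:R * r n)) ->
  (fun n => n%:R ^+ 2 * r n) @ \oo --> 0.
Proof.
move=> rpos sdec hcvg.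
set s := fun n => n%:R * r n.
have s0 n : 0 <= s n.
  case: n => [|n]; first by rewrite /s mul0r.
  by rewrite /s; apply: mulr_ge0 => //; apply: ltW; apply: rpos.
have sdec' a b : (1 <= a)%N -> (a <= b)%N -> s b <= s a.
  move=> a1; elim: b => [|b IH]; first by rewrite leqn0 => /eqP ->.
  rewrite leq_eqVlt => /orP[/eqP ->//|]; rewrite ltnS => hab.
  apply: le_trans (IH hab); apply: sdec; exact: leq_trans hab.
set S := series s.
have Smono : {homo S : n m / (n <= m)%N >-> n <= m}.
  move=> n m nm; rewrite /S /series /= (big_cat_nat (leq0n n) nm) /=.
  by rewrite lerDl; apply: sumr_ge0 => i _.
set l := limn S.
have Sl := nondecreasing_cvgn_le Smono hcvg.
apply/cvgr0Pnorm_lt => e e0.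
have e20 : 0 < e / 2 by lra.
have hS : S @ \oo --> l := hcvg.
move: hS => /cvgr_dist_lt/(_ _ e20) [M _ HM].
set M' := maxn M 1.
exists (M'.*2) => // N /= hN.
have hM'1 : (1 <= M')%N by rewrite leq_maxr.
have hMM' : (M <= M')%N by rewrite leq_maxl.
have hM'N : (M' <= N.+1)%N by lia.
have hdiff : S N.+1 - S M' = \sum_(M' <= i < N.+1) s i.
  rewrite /S /series /= (big_cat_nat (leq0n M') hM'N) /=; ring.
have hlow : s N *+ (N.+1 - M') <= S N.+1 - S M'.
  rewrite hdiff -sumr_const_nat; apply: ler_sum_nat => i /andP[hi1 hi2].
  apply: sdec'; [exact: leq_trans hM'1 hi1| by rewrite -ltnS].
have hup : S N.+1 - S M' < e / 2.
  have := HM M' hMM'; rewrite -/l => h.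
  have := Sl N.+1; rewrite -/l => h2.
  move: h; rewrite ltr_norml => /andP[h3 h4]; lra.
have hnat : (N <= 2 * (N.+1 - M'))%N by lia.
have hsN := s0 N.
have hN1 : (1 <= N)%N by lia.
rewrite ger0_norm; last by apply: mulr_ge0; [apply: exprn_ge0|exact: ltW (rpos _ hN1)].
have -> : N%:R ^+ 2 * r N = N%:R * s N by rewrite /s; ring.
apply: (@le_lt_trans _ _ (2 * (s N *+ (N.+1 - M')))); last lra.
rewrite -mulr_natl.
have hk : (N%:R : R) <= 2 * (N.+1 - M')%:R.
  by rewrite -[2]/(2%:R : R) -natrM ler_nat.
move: hk; set k := ((N.+1 - M')%:R : R); set t := (N%:R : R) => hk.
nra.
Qed.

Lemma xsec_Ehit T1 alpha n r x y :
  Ehit T1 (rotation alpha) n r (x, y) -> Sx T1 alpha x n r y.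
Proof. by []. Qed.

Lemma part1 T1 alpha (r : R^nat) x : (forall n, (1 <= n)%N -> 0 < r n) ->
  (fun n => n%:R ^+ 2 * r n) @ \oo --> 0 ->
  leb (xsection (liminf_set (fun n => Ehit T1 (rotation alpha) n (r n))) x) = 0%E.
Proof.
move=> rpos hr.
apply/le_anti/andP; split; last exact: leb_ge0.
apply: le_trans; first apply: (@lebS _
   (\bigcup_N \bigcap_(n in [set n | (N <= n)%N]) Sx T1 alpha x n (r n))).
  move=> y; rewrite /xsection /= in_setE => -[N _ HN].
  by exists N => // n hn; apply: xsec_Ehit; exact: HN.
apply: le_trans; first exact: leb_sub.
rewrite eseries0 // => N _ _.
apply/le_anti/andP; split; last exact: leb_ge0.
have h6 : (fun n => (n%:R ^+ 2 * r n * 6)%:E) @ \oo --> (0 : \bar R).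
  apply: cvg_EFin; first exact: nearW.
  have := cvgMr_tmp hr; move=> /(_ _ 6); rewrite mul0r; exact.
apply: (cvge_to_ge h6).
exists (maxn N 1) => // n /= hn.
apply: le_trans; last apply: (Sx_bound T1 alpha x n (r n) (rpos n _)); last by lia.
apply: lebS => y Hy; apply: Hy => /=; lia.
Qed.


Lemma series_lt_oo (r : R^nat) : (forall n, (1 <= n)%N -> 0 < r n) ->
  cvgn (series (fun n => n%:R * r n)) ->
  (\sum_(0 <= k <oo) ((k%:R * r k * 12)%:E) < +oo)%E.
Proof.
move=> rpos hc.
have -> : (\sum_(0 <= k <oo) ((k%:R * r k * 12)%:E))%E =
   limn (EFin \o series (fun k => k%:R * r k * 12)).
  congr (limn _); apply/funext => n /=; rewrite sumEFin //.
rewrite EFin_lim ?ltry //.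
have -> : series (fun k => k%:R * r k * 12) = (fun n => series (fun k => k%:R * r k) n * 12).
  by apply/funext => n; rewrite /series /= big_distrl.
by apply: is_cvgM => //; exact: is_cvg_cst.
Qed.


Lemma part2 T1 alpha (r : R^nat) x : (forall n, (1 <= n)%N -> 0 < r n) ->
  (forall n, (1 <= n)%N -> r n.+1 <= r n) ->
  (forall n, (1 <= n)%N -> n.+1%:R * r n.+1 <= n%:R * r n) ->
  cvgn (series (fun n => n%:R * r n)) ->
  leb (xsection (limsup_set (fun n => Ehit T1 (rotation alpha) n (r n))) x) = 0%E.
Proof.
move=> rpos rdec sdec hc.
have rmono a b : (1 <= a)%N -> (a <= b)%N -> r b <= r a.
  move=> a1; elim: b => [|b IH]; first by rewrite leqn0 => /eqP ->.
  rewrite leq_eqVlt => /orP[/eqP ->//|]; rewrite ltnS => hab.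
  apply: le_trans (IH hab); apply: rdec; exact: leq_trans hab.
set f := fun k : nat => ((k%:R * r k * 12)%:E : \bar R).
have key N : (1 <= N)%N ->
  (leb (xsection (limsup_set (fun n => Ehit T1 (rotation alpha) n (r n))) x)
   <= (N%:R ^+ 2 * r N * 6)%:E + \sum_(N <= m <oo) f m)%E.
  move=> N1.
  apply: le_trans; first apply: (@lebS _
     (Sx T1 alpha x N (r N) `|` \bigcup_(m in ~` `I_N) Dx T1 alpha x m (r m))).
    move=> y; rewrite /xsection /= in_setE => HN.
    have [n hn Hn] := HN N I.
    have [cx [cy [i [j [hi [hj hd]]]]]] : Sx T1 alpha x n (r n) y := Hn.
    have [hm|hm] := leqP (maxn i j).+1 N.
      left; split => //; split => //; exists i, j; split; first lia.
      split; first lia.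
      apply: lt_le_trans hd _; exact: rmono.
    right; exists (maxn i j).+1; first by rewrite /= /`I_N /=; lia.
    rewrite /Dx /=.
    have [hij|hij] := leqP j i.
      have hrm : r n <= r i.+1 by apply: rmono => //; lia.
      left; exists j; split; first lia.
      by split => //; exact: lt_le_trans hd hrm.
    have hrm : r n <= r j.+1 by apply: rmono => //; lia.
    right; exists i; split; first lia.
    by split => //; exact: lt_le_trans hd hrm.
  apply: le_trans; first exact: lebU2.
  apply: leeD; first exact: Sx_bound (rpos N N1).
  apply: le_trans; first exact: leb_tail.
  apply: lee_nneseries => [i _ _|m hm]; first exact: leb_ge0.
  case: m => [|m].
    rewrite /f mul0r mul0r; apply: le_trans; first apply: (@lebS _ set0).
      by move=> y [[j []]|[i []]].
    by rewrite /leb measure0.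
  exact: Dx_bound (rpos m.+1 _).
apply/le_anti/andP; split; last exact: leb_ge0.
have h1 : (fun n => (n%:R ^+ 2 * r n * 6)%:E) @ \oo --> (0 : \bar R).
  apply: cvg_EFin; first exact: nearW.
  have := cvgMr_tmp (nsn_to0 r rpos sdec hc); move=> /(_ _ 6); rewrite mul0r; exact.
have f0 : forall k : nat, true -> (0 <= f k)%E.
  move=> [|k] _; rewrite /f lee_fin; first by rewrite !mul0r.
  apply: mulr_ge0 => //; apply: mulr_ge0 => //.
  exact: ltW (rpos _ _).
have h2 := nneseries_tail_cvg (series_lt_oo r rpos hc) f0.
have h3 := cvgeD _ h1 h2.
have h4 := h3 eventually_filter isT.
rewrite adde0 in h4.
apply: (cvge_to_ge h4).
exists 1%N => // N /= hN; exact: key.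
Qed.

End Aux.

Theorem mainTheorem9 (R : realType) (T1 : R -> R) (alpha : R) :
  lebesgue_mp T1 -> exp_mixing_BV_Linf T1 ->
  (forall r : R^nat, (forall n, (1 <= n)%N -> 0 < r n) ->
     (fun n => n%:R ^+ 2 * r n) @ \oo --> 0 ->
     ((leb \x leb) (liminf_set (fun n => Ehit T1 (rotation alpha) n (r n))) = 0)%E) /\
  (forall r : R^nat, (forall n, (1 <= n)%N -> 0 < r n) ->
     (forall n, (1 <= n)%N -> r n.+1 <= r n) ->
     (forall n, (1 <= n)%N -> n.+1%:R * r n.+1 <= n%:R * r n) ->
     cvgn (series (fun n => n%:R * r n)) ->
     ((leb \x leb) (limsup_set (fun n => Ehit T1 (rotation alpha) n (r n))) = 0)%E).
Proof.
move=> _ _; split.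
- move=> r rpos hr; rewrite /product_measure1.
  apply: integral0_eq => x _ /=; exact: part1.
- move=> r rpos rdec sdec hc; rewrite /product_measure1.
  apply: integral0_eq => x _ /=; exact: part2.
Qed.
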